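(* Let $Y(y)=\int^y\frac{e^{3/(2s)}}{|s|^{3/2}}\,ds$ be a fixed antiderivative on an open interval not containing $0$, and for $\kappa\in\mathbb R\setminus\{0\}$ let $g[\kappa]=\kappa\,(Y(y)+x)\,dx\,dy$. If $\kappa,\tilde\kappa\in\mathbb R\setminus\{0\}$ and there is a local diffeomorphism $\phi$ between open subsets of the domain with $\phi^*g[\tilde\kappa]=g[\kappa]$, then $\kappa=\tilde\kappa$.
   Context: $dx\,dy$ denotes the symmetric product $\tfrac12(dx\otimes dy+dy\otimes dx)$. *)

(* Defs.v *)
From Stdlib Require Import Reals.
Open Scope R_scope.

Definition open2 (U : R -> R -> Prop) : Prop :=
  forall x y, U x y -> exists r, 0 < r /\
    forall x' y', Rabs (x' - x) < r -> Rabs (y' - y) < r -> U x' y'.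

Definition open1 (I : R -> Prop) : Prop :=
  forall y, I y -> exists r, 0 < r /\ forall y', Rabs (y' - y) < r -> I y'.

Definition open_interval_without_0 (I : R -> Prop) : Prop :=
  open1 I /\ (exists y, I y) /\
  (forall a b c, I a -> I c -> a <= b -> b <= c -> I b) /\ ~ I 0.

Definition continuous2_at (f : R -> R -> R) (x y : R) : Prop :=
  forall eps, 0 < eps -> exists delta, 0 < delta /\
    forall x' y', Rabs (x' - x) < delta -> Rabs (y' - y) < delta ->
      Rabs (f x' y' - f x y) < eps.

Fixpoint Ck (n : nat) (U : R -> R -> Prop) (f : R -> R -> R) : Prop :=
  match n with
  | O => forall x y, U x y -> continuous2_at f x y
  | S m => exists fx fy : R -> R -> R,
      (forall x y, U x y ->
         derivable_pt_lim (fun t => f t y) x (fx x y) /\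
         derivable_pt_lim (fun t => f x t) y (fy x y)) /\
      Ck m U fx /\ Ck m U fy
  end.

Definition smooth_on (U : R -> R -> Prop) (f : R -> R -> R) : Prop :=
  forall n, Ck n U f.

Definition integrand (s : R) : R := exp (3 / (2 * s)) / Rpower (Rabs s) (3 / 2).

(* Domain of the metric g[kappa] = kappa (Y(y)+x) dx dy: y in I, and
   nondegeneracy Y(y)+x <> 0. *)
Definition dom (I : R -> Prop) (Y : R -> R) (x y : R) : Prop :=
  I y /\ Y y + x <> 0.

(* g[kappa] at the point (x,y), evaluated on tangent vectors u v, with
   dx dy = 1/2 (dx (x) dy + dy (x) dx). *)
Definition gk (Y : R -> R) (k x y : R) (u v : R * R) : R :=
  k * (Y y + x) * ((fst u * snd v + snd u * fst v) / 2).

Definition jac_apply (a b c d : R) (u : R * R) : R * R :=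
  (a * fst u + b * snd u, c * fst u + d * snd u).

(* Main.v *)
From Stdlib Require Import Reals Lra.
From Coquelicot Require Import Coquelicot.
Require Import Defs.
Open Scope R_scope.

Lemma D_ext f g x l d : 0 < d -> (forall t, Rabs (t - x) < d -> f t = g t) ->
  derivable_pt_lim f x l -> derivable_pt_lim g x l.
Proof.
  intros Hd Heq Hf eps He.
  destruct (Hf eps He) as [del Hdel].
  assert (Hp : 0 < Rmin del d) by (apply Rmin_glb_lt; [apply cond_pos|lra]).
  exists (mkposreal _ Hp). intros h hnz hlt. simpl in hlt.
  rewrite <- (Heq (x + h)), <- (Heq x).
  - apply Hdel; auto. apply Rlt_le_trans with (1 := hlt), Rmin_l.
  - rewrite Rminus_diag, Rabs_R0; lra.
  - replace (x + h - x) with h by ring. apply Rlt_le_trans with (1 := hlt), Rmin_r.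
Qed.

Lemma eq_deriv f g x l1 l2 d : 0 < d -> (forall t, Rabs (t - x) < d -> f t = g t) ->
  derivable_pt_lim f x l1 -> derivable_pt_lim g x l2 -> l1 = l2.
Proof.
  intros Hd Heq H1 H2. apply (uniqueness_limite g x); auto.
  exact (D_ext f g x l1 d Hd Heq H1).
Qed.

Lemma in_nbhd c r t : Rabs (t - c) < r -> forall s, Rabs (s - t) < r - Rabs (t - c) -> Rabs (s - c) < r.
Proof.
  intros H s Hs. replace (s - c) with ((s - t) + (t - c)) by ring.
  eapply Rle_lt_trans; [apply Rabs_triang|]. lra.
Qed.

Lemma mvt_on g g' c r s t : (forall u, Rabs (u - c) < r -> derivable_pt_lim g u (g' u)) ->
  Rabs (s - c) < r -> Rabs (t - c) < r -> s < t ->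
  exists u, g t - g s = g' u * (t - s) /\ s < u < t.
Proof.
  intros Hd Hs Ht Hst. apply MVT_cor2; auto.
  intros u Hu. apply Hd.
  apply Rabs_def1; [apply Rabs_def2 in Hs; apply Rabs_def2 in Ht; lra|].
  apply Rabs_def2 in Hs; apply Rabs_def2 in Ht; lra.
Qed.

Lemma const_on g c r : (forall u, Rabs (u - c) < r -> derivable_pt_lim g u 0) ->
  forall t, Rabs (t - c) < r -> g t = g c.
Proof.
  intros Hd t Ht.
  assert (Hc : Rabs (c - c) < r) by (rewrite Rminus_diag, Rabs_R0;
    apply Rle_lt_trans with (2 := Ht); apply Rabs_pos).
  destruct (Rtotal_order t c) as [Hlt|[Heq|Hgt]].
  - destruct (mvt_on g (fun _ => 0) c r t c Hd Ht Hc Hlt) as [u [Hu _]]. lra.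
  - subst; reflexivity.
  - destruct (mvt_on g (fun _ => 0) c r c t Hd Hc Ht Hgt) as [u [Hu _]]. lra.
Qed.

Lemma inj_on g g' c r : (forall u, Rabs (u - c) < r -> derivable_pt_lim g u (g' u)) ->
  (forall u, Rabs (u - c) < r -> 0 < g' u) ->
  forall s t, Rabs (s - c) < r -> Rabs (t - c) < r -> s <> t -> g s <> g t.
Proof.
  intros Hd Hp s t Hs Ht Hne.
  assert (Hin : forall u, s < u < t \/ t < u < s -> Rabs (u - c) < r).
  { intros u Hu. apply Rabs_def2 in Hs; apply Rabs_def2 in Ht.
    apply Rabs_def1; lra. }
  destruct (Rtotal_order s t) as [Hlt|[Heq|Hgt]].
  - destruct (mvt_on g g' c r s t Hd Hs Ht Hlt) as [u [Hu Hu2]].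
    specialize (Hp u (Hin u (or_introl Hu2))).
    intro E. rewrite E in Hu. assert (g' u * (t - s) > 0) by (apply Rmult_lt_0_compat; lra). lra.
  - contradiction.
  - destruct (mvt_on g g' c r t s Hd Ht Hs Hgt) as [u [Hu Hu2]].
    specialize (Hp u (Hin u (or_intror Hu2))).
    intro E. rewrite E in Hu. assert (g' u * (s - t) > 0) by (apply Rmult_lt_0_compat; lra). lra.
Qed.
Open Scope R_scope.

Lemma integrand_pos s : s <> 0 -> 0 < integrand s.
Proof.
  intro Hs. unfold integrand, Rpower. apply Rdiv_lt_0_compat; apply exp_pos.
Qed.

Lemma integrand_sq s : s <> 0 -> integrand s ^ 2 * Rabs s ^ 3 = exp (3 / s).
Proof.
  intro Hs. assert (Ha : 0 < Rabs s) by (apply Rabs_pos_lt; auto).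
  assert (Hp : Rpower (Rabs s) (3/2) ^ 2 = Rabs s ^ 3).
  { rewrite <- (Rpower_pow 3 (Rabs s) Ha). simpl.
    rewrite Rmult_1_r, <- Rpower_plus. f_equal. lra. }
  assert (He : exp (3 / (2 * s)) ^ 2 = exp (3 / s)).
  { simpl. rewrite Rmult_1_r, <- exp_plus. f_equal. field. auto. }
  unfold integrand. unfold Rdiv at 1. rewrite Rpow_mult_distr, He, <- Hp.
  assert (0 < Rpower (Rabs s) (3/2)) by (unfold Rpower; apply exp_pos).
  rewrite pow_inv. field. lra.
Qed.

Lemma lin0 c r p1 p0 : 0 < r -> (forall y, Rabs (y - c) < r -> p1 * y + p0 = 0) -> p1 = 0 /\ p0 = 0.
Proof.
  intros Hr H. 
  assert (H1 := H c ltac:(rewrite Rminus_diag, Rabs_R0; lra)).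
  assert (H2 := H (c + r/2) ltac:(replace (c + r/2 - c) with (r/2) by ring; rewrite Rabs_right; lra)).
  assert (p1 * (r/2) = 0) by lra.
  assert (p1 = 0) by (apply Rmult_integral in H0; destruct H0; lra). subst. split; lra.
Qed.

Lemma quad0 c r p2 p1 p0 : 0 < r -> (forall y, Rabs (y - c) < r -> p2 * y^2 + p1 * y + p0 = 0) ->
  p2 = 0 /\ p1 = 0 /\ p0 = 0.
Proof.
  intros Hr H. set (e := r/3).
  assert (H1 := H c ltac:(rewrite Rminus_diag, Rabs_R0; lra)).
  assert (H2 := H (c + e) ltac:(replace (c + e - c) with e by ring; unfold e; rewrite Rabs_right; lra)).
  assert (H3 := H (c + 2*e) ltac:(replace (c + 2*e - c) with (2*e) by ring; unfold e; rewrite Rabs_right; lra)).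
  assert (Hq : 2 * p2 * (e*e) = (p2 * (c+2*e)^2 + p1 * (c+2*e) + p0) - 2 * (p2 * (c+e)^2 + p1*(c+e) + p0)
     + (p2 * c^2 + p1*c + p0)) by ring.
  rewrite H1, H2, H3 in Hq. replace (0 - 2*0 + 0) with 0 in Hq by ring.
  assert (p2 = 0).
  { assert (0 < e*e) by (unfold e; nra). apply Rmult_integral in Hq. destruct Hq as [Hq|Hq]; lra. }
  subst p2. destruct (lin0 c r p1 p0 Hr) as [-> ->]; auto.
  intros y Hy. rewrite <- (H y Hy). ring.
Qed.

Lemma cubic0 c r al be ga de K : 0 < r -> (forall x, Rabs (x - c) < r -> (al*x+be)*(ga*x+de)^2 = K) ->
  al * ga^2 = 0.
Proof.
  intros Hr H. set (e := r/4).
  assert (H1 := H c ltac:(rewrite Rminus_diag, Rabs_R0; lra)).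
  assert (H2 := H (c + e) ltac:(replace (c + e - c) with e by ring; unfold e; rewrite Rabs_right; lra)).
  assert (H3 := H (c + 2*e) ltac:(replace (c + 2*e - c) with (2*e) by ring; unfold e; rewrite Rabs_right; lra)).
  assert (H4 := H (c + 3*e) ltac:(replace (c + 3*e - c) with (3*e) by ring; unfold e; rewrite Rabs_right; lra)).
  assert (Hq : 6 * (al * ga^2) * (e*e*e) = (al*(c+3*e)+be)*(ga*(c+3*e)+de)^2 - 3*((al*(c+2*e)+be)*(ga*(c+2*e)+de)^2)
     + 3 * ((al*(c+e)+be)*(ga*(c+e)+de)^2) - (al*c+be)*(ga*c+de)^2) by ring.
  rewrite H1, H2, H3, H4 in Hq. replace (K - 3*K + 3*K - K) with 0 in Hq by ring.
  assert (0 < e*e*e) by (assert (0 < e) by (unfold e; lra); repeat apply Rmult_lt_0_compat; lra).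
  apply Rmult_integral in Hq. destruct Hq as [Hq|Hq]; lra.
Qed.

Lemma L1 c r sg A C K : 0 < r -> (sg = 1 \/ sg = -1) ->
  (forall y, Rabs (y - c) < r -> y <> 0 /\ Rabs y = sg * y) ->
  (forall y, Rabs (y - c) < r -> integrand y ^ 2 * (A * y + C) ^ 3 = K) -> K <> 0 -> False.
Proof.
  intros Hr Hsg Hy H HK.
  assert (H1 : forall y, Rabs (y - c) < r -> exp (3/y) * (A*y+C)^3 = K * sg * y^3).
  { intros y Hyc. destruct (Hy y Hyc) as [Hy0 Hab].
    rewrite <- (integrand_sq y Hy0), <- (H y Hyc), Hab.
    replace ((sg*y)^3) with (sg^2 * sg * y^3) by ring.
    replace (sg^2) with 1 by (destruct Hsg; subst; ring). ring. }
  assert (H2 : forall y, Rabs (y - c) < r -> (A + C) * y + C = 0).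
  { intros y Hyc. destruct (Hy y Hyc) as [Hy0 Hab].
    set (G := fun t => exp (3/t) * (A*t+C)^3 - K * sg * t^3).
    assert (HG : derivable_pt_lim G y (exp (3/y) * (-3/y^2) * (A*y+C)^3 + 3*A*exp(3/y)*(A*y+C)^2 - 3*K*sg*y^2)).
    { apply is_derive_Reals. unfold G. auto_derive; [auto|unfold Rdiv; field; auto]. }
    assert (Hz : exp (3/y) * (-3/y^2) * (A*y+C)^3 + 3*A*exp(3/y)*(A*y+C)^2 - 3*K*sg*y^2 = 0).
    { apply (eq_deriv G (fun _ => 0) y _ _ (r - Rabs (y - c))); [lra| |exact HG|apply derivable_pt_lim_const].
      intros t Ht. unfold G. rewrite (H1 t (in_nbhd c r y Hyc t Ht)). ring. }
    assert (Hm : (exp (3/y) * (-3/y^2) * (A*y+C)^3 + 3*A*exp(3/y)*(A*y+C)^2 - 3*K*sg*y^2) * (y^2*(A*y+C))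
       = -3*(exp (3/y) * (A*y+C)^3)*(A*y+C) + 3*A*y^2*(exp (3/y) * (A*y+C)^3) - 3*K*sg*y^4*(A*y+C)) by (field; auto).
    rewrite Hz, (H1 y Hyc) in Hm.
    assert (Hm2 : 0 = (-3 * K * sg * y^3) * ((A + C) * y + C)) by (transitivity (0*(y^2*(A*y+C))); [ring|rewrite Hm; ring]).
    symmetry in Hm2. apply Rmult_integral in Hm2. destruct Hm2 as [Hm2|Hm2]; auto.
    exfalso. assert (Hs0 : sg <> 0) by lra. assert (Hy3 : y^3 <> 0) by (apply pow_nonzero; auto).
    assert (Hk3 : -3 * K * sg <> 0) by (repeat apply Rmult_integral_contrapositive_currified; lra).
    exact (Rmult_integral_contrapositive_currified _ _ Hk3 Hy3 Hm2). }
  destruct (lin0 c r (A+C) C Hr H2) as [Ha Hc].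
  assert (Hc0 : Rabs (c - c) < r) by (rewrite Rminus_diag, Rabs_R0; lra).
  specialize (H1 c Hc0). destruct (Hy c Hc0) as [Hc1 _].
  replace (A*c+C) with 0 in H1 by (replace A with (-C) by lra; rewrite Hc; ring).
  assert (Hs0 : sg <> 0) by lra. assert (Hc3 : c^3 <> 0) by (apply pow_nonzero; auto).
  assert (Hk : K * sg * c^3 <> 0) by (repeat apply Rmult_integral_contrapositive_currified; lra).
  apply Hk. rewrite <- H1. ring.
Qed.

Lemma L2 c r B g a : 0 < r -> B <> 0 -> a <> 0 ->
  (forall y, Rabs (y - c) < r -> y <> 0 /\ B * y + g <> 0) ->
  (forall y, Rabs (y - c) < r -> a^2 * exp (3/y) * (B*y+g)^3 = B^2 * exp (3/(B*y+g)) * y^3) ->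
  B = 1 /\ g = 0 /\ a^2 = 1.
Proof.
  intros Hr HB Ha Hy H.
  assert (H2 : forall y, Rabs (y - c) < r -> (B - B^2 - B*g) * y^2 + (-(2*B*g + g^2)) * y + (- g^2) = 0).
  { intros y Hyc. destruct (Hy y Hyc) as [Hy0 Hu0].
    set (G := fun t => a^2 * exp (3/t) * (B*t+g)^3 - B^2 * exp (3/(B*t+g)) * t^3).
    set (D := a^2 * exp (3/y) * (-3/y^2) * (B*y+g)^3 + a^2 * exp (3/y) * (3*B*(B*y+g)^2)
        - B^2 * exp (3/(B*y+g)) * (-3*B/(B*y+g)^2) * y^3 - B^2 * exp (3/(B*y+g)) * (3*y^2)).
    assert (HG : derivable_pt_lim G y D).
    { apply is_derive_Reals. unfold G, D. auto_derive; [auto|unfold Rdiv; field; auto]. }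
    assert (Hz : D = 0).
    { apply (eq_deriv G (fun _ => 0) y _ _ (r - Rabs (y - c))); [lra| |exact HG|apply derivable_pt_lim_const].
      intros t Ht. unfold G. rewrite (H t (in_nbhd c r y Hyc t Ht)). ring. }
    set (W := a^2 * exp (3/y) * (B*y+g)^3).
    assert (Hm : D * (y^2 * (B*y+g)^2) = 3 * W * ((B - B^2 - B*g) * y^2 + (-(2*B*g + g^2)) * y + (- g^2))).
    { transitivity (-3 * W * (B*y+g)^2 + 3*B*y^2*(B*y+g)*W + 3*B*y^2*(B^2 * exp (3/(B*y+g)) * y^3)
         - 3*y*(B*y+g)^2*(B^2 * exp (3/(B*y+g)) * y^3)).
      - unfold D, W. field. auto.
      - rewrite <- (H y Hyc). fold W. ring. }
    rewrite Hz, Rmult_0_l in Hm. symmetry in Hm. apply Rmult_integral in Hm.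
    destruct Hm as [Hm|Hm]; auto. exfalso. unfold W in Hm.
    assert (0 < exp (3/y)) by apply exp_pos.
    assert (a^2 <> 0) by (apply pow_nonzero; auto).
    assert ((B*y+g)^3 <> 0) by (apply pow_nonzero; auto).
    assert (a^2 * exp (3/y) * (B*y+g)^3 <> 0) by (repeat apply Rmult_integral_contrapositive_currified; lra).
    lra. }
  destruct (quad0 c r _ _ _ Hr H2) as [H2a [H2b H2c]].
  assert (Hg : g = 0) by nra.
  subst g. assert (HB1 : B = 1).
  { assert (B * (1 - B) = 0) by (rewrite <- H2a; ring). apply Rmult_integral in H0. lra. }
  subst B. repeat split; auto.
  assert (Hc0 : Rabs (c - c) < r) by (rewrite Rminus_diag, Rabs_R0; lra).
  specialize (H c Hc0). destruct (Hy c Hc0) as [Hc1 _].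
  replace (1*c+0) with c in H by ring.
  assert (0 < exp (3/c)) by apply exp_pos. assert (c^3 <> 0) by (apply pow_nonzero; auto).
  apply (Rmult_eq_reg_r (exp (3/c) * c^3)).
  - replace (a^2 * (exp (3/c) * c^3)) with (a^2 * exp (3/c) * c^3) by ring. rewrite H. ring.
  - apply Rmult_integral_contrapositive_currified; lra.
Qed.

Lemma same_sign (I : R -> Prop) (HI : open_interval_without_0 I) y u :
  I y -> I u -> Rabs u * y = Rabs y * u.
Proof.
  intros Hy Hu. destruct HI as [_ [_ [Hint H0]]].
  assert (y <> 0) by (intro; subst; auto). assert (u <> 0) by (intro; subst; auto).
  destruct (Rlt_or_le 0 y); destruct (Rlt_or_le 0 u).
  - rewrite !Rabs_right by lra; ring.
  - exfalso. apply H0. apply (Hint u 0 y); auto; lra.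
  - exfalso. apply H0. apply (Hint y 0 u); auto; lra.
  - rewrite !Rabs_left by lra; ring.
Qed.

Lemma I_nz (I : R -> Prop) (HI : open_interval_without_0 I) y : I y -> y <> 0.
Proof. intros Hy E. subst. destruct HI as [_ [_ [_ H0]]]. auto. Qed.

Lemma c0in c r : 0 < r -> Rabs (c - c) < r.
Proof. intros; rewrite Rminus_diag, Rabs_R0; lra. Qed.

Lemma c2in c r : 0 < r -> Rabs (c + r/2 - c) < r.
Proof. intros; replace (c + r/2 - c) with (r/2) by ring; rewrite Rabs_right; lra. Qed.
Lemma dsq F u l : derivable_pt_lim F u l -> derivable_pt_lim (fun x => F x ^ 2) u (2 * F u * l).
Proof.
  intro H. apply is_derive_Reals in H. apply is_derive_Reals.
  auto_derive. exists l; exact H.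
  replace (Derive (fun x => F x) u) with l by (symmetry; apply is_derive_unique; exact H). ring.
Qed.
Lemma dinv F u l : F u <> 0 -> derivable_pt_lim F u l -> derivable_pt_lim (fun x => / F x) u (- l / F u ^ 2).
Proof.
  intros Hu H. apply is_derive_Reals in H. apply is_derive_Reals.
  auto_derive. split; [exists l; exact H|auto].
  replace (Derive (fun x => F x) u) with l by (symmetry; apply is_derive_unique; exact H). field; auto.
Qed.
Lemma daff F u l a b : derivable_pt_lim F u l -> derivable_pt_lim (fun x => a + b * F x) u (b * l).
Proof.
  intros H. apply is_derive_Reals in H. apply is_derive_Reals.
  auto_derive. exists l; exact H.
  replace (Derive (fun x => F x) u) with l by (symmetry; apply is_derive_unique; exact H). ring.
Qed.
Lemma dlinm F u l a : derivable_pt_lim F u l -> derivable_pt_lim (fun x => F x - a * x) u (l - a).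
Proof.
  intros H. apply is_derive_Reals in H. apply is_derive_Reals.
  auto_derive. exists l; exact H.
  replace (Derive (fun x => F x) u) with l by (symmetry; apply is_derive_unique; exact H). ring.
Qed.
Lemma dcompaff F u l a b : derivable_pt_lim F (a * u + b) l -> derivable_pt_lim (fun x => F (a * x + b)) u (a * l).
Proof.
  intros H. apply is_derive_Reals in H. apply is_derive_Reals.
  auto_derive. exists l; exact H.
  replace (Derive (fun x => F x) (a * u + b)) with l by (symmetry; apply is_derive_unique; exact H). ring.
Qed.

Lemma case1 (I : R -> Prop) (HI : open_interval_without_0 I)
  (Y : R -> R) (HY : forall s, I s -> derivable_pt_lim Y s (integrand s))
  (k kt : R) (hk : k <> 0) (hkt : kt <> 0) x0 y0 r (Hr : 0 < r) f A h B
  (Hf : forall x, Rabs (x - x0) < r -> derivable_pt_lim f x (A x))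
  (Hh : forall y, Rabs (y - y0) < r -> derivable_pt_lim h y (B y))
  (HA : forall x, Rabs (x - x0) < r -> A x <> 0)
  (HB : forall y, Rabs (y - y0) < r -> B y <> 0)
  (HIy : forall y, Rabs (y - y0) < r -> I y)
  (HIh : forall y, Rabs (y - y0) < r -> I (h y))
  (HE : forall x y, Rabs (x - x0) < r -> Rabs (y - y0) < r ->
     kt * (Y (h y) + f x) * (A x * B y) = k * (Y y + x)) : k = kt.
Proof.
  assert (Hy0 := c0in y0 r Hr). assert (Hx0 := c0in x0 r Hr).
  assert (Hinj : forall y, Rabs (y - y0) < r -> y <> y0 -> Y y <> Y y0).
  { intros y Hy Hne. apply (inj_on Y integrand y0 r); auto.
    intros u Hu. apply integrand_pos. apply (I_nz I HI); auto. }
  assert (Hpq : forall y, Rabs (y - y0) < r -> y <> y0 -> forall x, Rabs (x - x0) < r ->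
     A x * ((B y0 * Y (h y0) - B y * Y (h y)) + (B y0 - B y) * f x) = k * (Y y0 - Y y) / kt).
  { intros y Hy Hne x Hx. assert (E0 := HE x y0 Hx Hy0). assert (E1 := HE x y Hx Hy).
    apply (Rmult_eq_reg_l kt); auto. unfold Rdiv.
    replace (kt * (k * (Y y0 - Y y) * / kt)) with (k * (Y y0 + x) - k * (Y y + x)) by (field; auto).
    rewrite <- E0, <- E1. ring. }
  assert (Hmnz : forall y, Rabs (y - y0) < r -> y <> y0 -> k * (Y y0 - Y y) / kt <> 0).
  { intros y Hy Hne. assert (Y y0 - Y y <> 0) by (intro; apply (Hinj y Hy Hne); lra).
    unfold Rdiv. repeat apply Rmult_integral_contrapositive_currified; auto. apply Rinv_neq_0_compat; auto. }
  assert (HBc : forall y, Rabs (y - y0) < r -> B y = B y0).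
  { intros y Hy. destruct (Req_dec y y0) as [->|Hne]; auto.
    set (p := B y0 * Y (h y0) - B y * Y (h y)). set (q := B y0 - B y).
    set (m := k * (Y y0 - Y y) / kt).
    assert (Hm : m <> 0) by (apply Hmnz; auto).
    destruct (Req_dec q 0) as [Hq|Hq]; [unfold q in Hq; lra|exfalso].
    assert (Hg : forall x, Rabs (x - x0) < r -> A x * (p + q * f x) = m) by (intros; apply Hpq; auto).
    assert (Hsq : forall x, Rabs (x - x0) < r ->
       (p + q * f x)^2 - 2*q*m*x = (p + q * f x0)^2 - 2*q*m*x0).
    { apply (const_on (fun x => (p + q * f x)^2 - 2*q*m*x) x0 r).
      intros u Hu.
      assert (HF := dsq _ u _ (daff f u (A u) p q (Hf u Hu))).
      assert (HF2 := dlinm _ u _ (2*q*m) HF).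
      replace 0 with (2 * (p + q * f u) * (q * A u) - 2 * q * m)
        by (rewrite <- (Hg u Hu); ring).
      exact HF2. }
    set (G2 := (p + q * f x0)^2 - 2*q*m*x0).
    assert (Hcub : forall x, Rabs (x - x0) < r ->
      (2*q*m * x + G2) * ((k*q) * x + (k*q*Y y0 - kt*B y0*m))^2 = (kt*B y0*m*(q*Y (h y0) - p))^2).
    { intros x Hx. assert (E0 := HE x y0 Hx Hy0).
      assert (Key : (p + q * f x) * (k*q*(Y y0 + x) - kt*B y0*m) = kt*B y0*m*(q*Y (h y0) - p)).
      { transitivity (k*(Y y0+x)*(q*(p+q * f x)) - (p+q * f x)*kt*B y0*m); [ring|].
        rewrite <- E0. rewrite <- (Hg x Hx). ring. }
      rewrite <- Key. replace (2*q*m*x + G2) with ((p + q * f x)^2) by (unfold G2; rewrite <- (Hsq x Hx); ring).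
      ring. }
    assert (Hc := cubic0 x0 r _ _ _ _ _ Hr Hcub).
    assert (k * q <> 0) by (apply Rmult_integral_contrapositive_currified; auto).
    assert ((k*q)^2 <> 0) by (apply pow_nonzero; auto).
    assert (2*q*m <> 0) by (apply Rmult_integral_contrapositive_currified; [apply Rmult_integral_contrapositive_currified; [lra|auto]|auto]).
    exact (Rmult_integral_contrapositive_currified _ _ H1 H0 Hc). }
  set (B0 := B y0). set (y1 := y0 + r/2).
  assert (Hy1 : Rabs (y1 - y0) < r) by (apply c2in; auto).
  assert (Hy1n : y1 <> y0) by (unfold y1; lra).
  set (p1 := B0 * Y (h y0) - B y1 * Y (h y1)). set (m1 := k * (Y y0 - Y y1) / kt).
  assert (Hm1 : m1 <> 0) by (apply Hmnz; auto).
  assert (HAp : forall x, Rabs (x - x0) < r -> A x * p1 = m1).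
  { intros x Hx. unfold m1. rewrite <- (Hpq y1 Hy1 Hy1n x Hx). unfold p1, B0. rewrite (HBc y1 Hy1). ring. }
  assert (Hp1 : p1 <> 0) by (intro E; apply Hm1; rewrite <- (HAp x0 Hx0), E; ring).
  set (a := A x0).
  assert (HAc : forall x, Rabs (x - x0) < r -> A x = a).
  { intros x Hx. apply (Rmult_eq_reg_r p1); auto. rewrite (HAp x Hx). unfold a. rewrite (HAp x0 Hx0). reflexivity. }
  assert (Ha : a <> 0) by (apply HA; auto).
  assert (Hfa : forall x, Rabs (x - x0) < r -> f x - a * x = f x0 - a * x0).
  { apply (const_on (fun x => f x - a * x) x0 r). intros u Hu.
    assert (H := dlinm f u (A u) a (Hf u Hu)). rewrite (HAc u Hu), Rminus_diag in H. exact H. }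
  set (x1 := x0 + r/2). assert (Hx1 : Rabs (x1 - x0) < r) by (apply c2in; auto).
  assert (Hk : k = kt * a^2 * B0).
  { assert (E0 := HE x0 y0 Hx0 Hy0). assert (E1 := HE x1 y0 Hx1 Hy0).
    rewrite (HAc x1 Hx1) in E1. fold a B0 in E0, E1.
    assert (Hf1 : f x1 = f x0 + a * (x1 - x0)) by (assert (Hq := Hfa x1 Hx1); nra).
    rewrite Hf1 in E1. unfold x1 in E1.
    apply (Rmult_eq_reg_r (r/2)); [|lra].
    transitivity (k * (Y y0 + (x0 + r/2)) - k * (Y y0 + x0)); [ring|]. rewrite <- E0, <- E1. ring. }
  assert (Hha : forall y, Rabs (y - y0) < r -> h y - B0 * y = h y0 - B0 * y0).
  { apply (const_on (fun y => h y - B0 * y) y0 r). intros u Hu.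
    assert (H := dlinm h u (B u) B0 (Hh u Hu)). rewrite (HBc u Hu), Rminus_diag in H. exact H. }
  set (ga := h y0 - B0 * y0).
  assert (Hhy : forall y, Rabs (y - y0) < r -> h y = B0 * y + ga) by (intros y Hy; unfold ga; rewrite <- (Hha y Hy); ring).
  assert (HB0 : B0 <> 0) by (apply HB; auto).
  assert (HYr : forall y, Rabs (y - y0) < r -> Y (B0 * y + ga) = (a * x0 - f x0) + a * Y y).
  { intros y Hy. assert (E := HE x0 y Hx0 Hy). rewrite (HBc y Hy), Hk in E. fold a B0 in E. rewrite <- (Hhy y Hy).
    apply (Rmult_eq_reg_l (kt * a * B0)); [|repeat apply Rmult_integral_contrapositive_currified; auto].
    transitivity (kt * (Y (h y) + f x0) * (a * B0) - kt * f x0 * (a * B0)); [ring|].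
    rewrite E. ring. }
  assert (Hder : forall y, Rabs (y - y0) < r -> B0 * integrand (B0 * y + ga) = a * integrand y).
  { intros y Hy. apply (eq_deriv (fun t => Y (B0 * t + ga)) (fun t => (a * x0 - f x0) + a * Y t) y _ _ (r - Rabs (y - y0))).
    - lra.
    - intros t Ht. apply HYr. apply (in_nbhd y0 r y Hy t Ht).
    - apply dcompaff. apply HY. rewrite <- (Hhy y Hy). auto.
    - apply daff. apply HY. auto. }
  assert (HL : forall y, Rabs (y - y0) < r -> a^2 * exp (3/y) * (B0*y+ga)^3 = B0^2 * exp (3/(B0*y+ga)) * y^3).
  { intros y Hy. assert (Hiy := HIy y Hy). assert (Hiu := HIh y Hy). rewrite Hhy in Hiu; auto.
    rewrite <- (integrand_sq y (I_nz I HI y Hiy)), <- (integrand_sq _ (I_nz I HI _ Hiu)).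
    assert (Hs := same_sign I HI y _ Hiy Hiu).
    assert (Hd := Hder y Hy).
    transitivity ((a * integrand y)^2 * (Rabs y * (B0*y+ga))^3); [ring|].
    rewrite <- Hs, <- Hd. ring. }
  destruct (L2 y0 r B0 ga a Hr HB0 Ha) as [HB1 [_ Ha2]]; auto.
  - intros y Hy. split; [apply (I_nz I HI); auto|]. rewrite <- Hhy; auto. apply (I_nz I HI); auto.
  - rewrite Hk, HB1, Ha2. ring.
Qed.

Lemma sign_lemma (I : R -> Prop) (HI : open_interval_without_0 I) y0 : I y0 ->
  exists sg, (sg = 1 \/ sg = -1) /\ forall y, I y -> Rabs y = sg * y.
Proof.
  intros H0. assert (Hn := I_nz I HI y0 H0).
  destruct (Rlt_or_le 0 y0).
  - exists 1. split; auto. intros y Hy. assert (Hs := same_sign I HI y0 y H0 Hy).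
    rewrite (Rabs_right y0) in Hs by lra. apply (Rmult_eq_reg_r y0); [|auto]. rewrite Hs. ring.
  - exists (-1). split; auto. intros y Hy. assert (Hs := same_sign I HI y0 y H0 Hy).
    rewrite (Rabs_left y0) in Hs by lra. apply (Rmult_eq_reg_r y0); [|auto]. lra.
Qed.

Lemma case2 (I : R -> Prop) (HI : open_interval_without_0 I)
  (Y : R -> R) (HY : forall s, I s -> derivable_pt_lim Y s (integrand s))
  (k kt : R) (hk : k <> 0) (hkt : kt <> 0) x0 y0 r (Hr : 0 < r) f Bf h C
  (Hf : forall y, Rabs (y - y0) < r -> derivable_pt_lim f y (Bf y))
  (HB : forall y, Rabs (y - y0) < r -> Bf y <> 0)
  (HIy : forall y, Rabs (y - y0) < r -> I y)
  (HE : forall x y, Rabs (x - x0) < r -> Rabs (y - y0) < r ->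
     kt * (Y (h x) + f y) * (Bf y * C x) = k * (Y y + x)) : False.
Proof.
  assert (Hy0 := c0in y0 r Hr). assert (Hx0 := c0in x0 r Hr).
  destruct (sign_lemma I HI y0 (HIy y0 Hy0)) as [sg [Hsg Hsgy]].
  assert (HL1 : forall A C0 K, (forall y, Rabs (y - y0) < r -> integrand y ^ 2 * (A * y + C0) ^ 3 = K) -> K <> 0 -> False).
  { intros A C0 K H HK. apply (L1 y0 r sg A C0 K Hr Hsg); auto.
    intros y Hy. split; [apply (I_nz I HI)|apply Hsgy]; auto. }
  set (x1 := x0 + r/2). assert (Hx1 : Rabs (x1 - x0) < r) by (apply c2in; auto).
  set (P0 := Y (h x0)). set (P1 := Y (h x1)). set (C0 := C x0). set (C1 := C x1).
  set (p := C0 * P0 - C1 * P1). set (q := C0 - C1). set (m := k * (x0 - x1) / kt).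
  assert (Hm : m <> 0).
  { unfold m, x1. unfold Rdiv. repeat apply Rmult_integral_contrapositive_currified; auto; try lra.
    apply Rinv_neq_0_compat; auto. }
  assert (Hg : forall y, Rabs (y - y0) < r -> Bf y * (p + q * f y) = m).
  { intros y Hy. assert (E0 := HE x0 y Hx0 Hy). assert (E1 := HE x1 y Hx1 Hy). fold P0 P1 C0 C1 in E0, E1.
    apply (Rmult_eq_reg_l kt); auto. unfold m, Rdiv.
    replace (kt * (k * (x0 - x1) * / kt)) with (k * (Y y + x0) - k * (Y y + x1)) by (field; auto).
    rewrite <- E0, <- E1. unfold p, q. ring. }
  assert (HYf : forall y, Rabs (y - y0) < r -> Y y = kt * (P0 + f y) * (Bf y * C0) / k - x0).
  { intros y Hy. assert (E0 := HE x0 y Hx0 Hy). fold P0 C0 in E0. rewrite E0. field; auto. }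
  destruct (Req_dec q 0) as [Hq|Hq].
  - assert (Hp : p <> 0) by (intro E; apply Hm; rewrite <- (Hg y0 Hy0), E, Hq; ring).
    set (b := Bf y0).
    assert (Hbc : forall y, Rabs (y - y0) < r -> Bf y = b).
    { intros y Hy. apply (Rmult_eq_reg_r p); auto. unfold b.
      transitivity m; [rewrite <- (Hg y Hy), Hq; ring|rewrite <- (Hg y0 Hy0), Hq; ring]. }
    assert (Hfa : forall y, Rabs (y - y0) < r -> f y - b * y = f y0 - b * y0).
    { apply (const_on (fun y => f y - b * y) y0 r). intros u Hu.
      assert (H := dlinm f u (Bf u) b (Hf u Hu)). rewrite (Hbc u Hu), Rminus_diag in H. exact H. }
    set (c1 := kt * b * b * C0 / k). set (c0 := kt * (P0 + (f y0 - b * y0)) * (b * C0) / k - x0).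
    assert (HYa : forall y, Rabs (y - y0) < r -> Y y = c0 + c1 * y).
    { intros y Hy. rewrite (HYf y Hy), (Hbc y Hy).
      replace (f y) with ((f y0 - b * y0) + b * y) by (rewrite <- (Hfa y Hy); ring).
      unfold c0, c1. field. auto. }
    assert (Hi : forall y, Rabs (y - y0) < r -> integrand y = c1).
    { intros y Hy. apply (eq_deriv Y (fun t => c0 + c1 * t) y _ _ (r - Rabs (y - y0))).
      - lra.
      - intros t Ht. apply HYa. apply (in_nbhd y0 r y Hy t Ht).
      - apply HY. auto.
      - assert (H := daff (fun t => t) y 1 c0 c1 (derivable_pt_lim_id y)). rewrite Rmult_1_r in H. exact H. }
    apply (HL1 0 1 (c1 ^ 2)).
    + intros y Hy. rewrite (Hi y Hy). ring.
    + apply pow_nonzero. rewrite <- (Hi y0 Hy0). apply Rgt_not_eq, integrand_pos, (I_nz I HI); auto.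
  - assert (Hg0 : forall y, Rabs (y - y0) < r -> p + q * f y <> 0).
    { intros y Hy E. specialize (Hg y Hy). rewrite E, Rmult_0_r in Hg. auto. }
    assert (Hsq : forall y, Rabs (y - y0) < r ->
       (p + q * f y)^2 - 2*q*m*y = (p + q * f y0)^2 - 2*q*m*y0).
    { apply (const_on (fun y => (p + q * f y)^2 - 2*q*m*y) y0 r).
      intros u Hu.
      assert (HF := dsq _ u _ (daff f u (Bf u) p q (Hf u Hu))).
      assert (HF2 := dlinm _ u _ (2*q*m) HF).
      replace 0 with (2 * (p + q * f u) * (q * Bf u) - 2 * q * m)
        by (rewrite <- (Hg u Hu); ring).
      exact HF2. }
    set (G2 := (p + q * f y0)^2 - 2*q*m*y0).
    set (al := kt*m*C0/(k*q) - x0). set (be := kt*m*C0*(P0 - p/q)/k).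
    assert (HYg : forall y, Rabs (y - y0) < r -> Y y = al + be * / (p + q * f y)).
    { intros y Hy. rewrite (HYf y Hy).
      assert (Hgy := Hg0 y Hy).
      replace (Bf y) with (m / (p + q * f y)) by (rewrite <- (Hg y Hy); field; auto).
      unfold al, be. field. repeat split; auto. }
    assert (Hint : forall y, Rabs (y - y0) < r -> integrand y = be * (- (q * Bf y) / (p + q * f y)^2)).
    { intros y Hy. apply (eq_deriv Y (fun t => al + be * / (p + q * f t)) y _ _ (r - Rabs (y - y0))).
      - lra.
      - intros t Ht. apply HYg. apply (in_nbhd y0 r y Hy t Ht).
      - apply HY. auto.
      - apply (daff (fun t => / (p + q * f t))).
        apply (dinv (fun t => p + q * f t)); [apply Hg0; auto|].
        apply daff. auto. }
    assert (HK : forall y, Rabs (y - y0) < r -> integrand y * (p + q * f y)^3 = - (be * q * m)).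
    { intros y Hy. rewrite (Hint y Hy). assert (Hgy := Hg0 y Hy).
      transitivity (- be * q * (Bf y * (p + q * f y))); [field; auto|rewrite (Hg y Hy); ring]. }
    apply (HL1 (2*q*m) G2 ((be*q*m)^2)).
    + intros y Hy. replace (2*q*m*y + G2) with ((p + q * f y)^2) by (unfold G2; rewrite <- (Hsq y Hy); ring).
      transitivity ((integrand y * (p + q * f y)^3)^2); [ring|]. rewrite (HK y Hy). ring.
    + apply pow_nonzero. intro E.
      assert (E2 := HK y0 Hy0). rewrite E, Ropp_0 in E2.
      apply Rmult_integral in E2. destruct E2 as [E2|E2].
      * assert (Hp0 := integrand_pos y0 (I_nz I HI y0 (HIy y0 Hy0))). lra.
      * apply (pow_nonzero _ 3 (Hg0 y0 Hy0)). auto.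
Qed.

Lemma nz_near g x y : continuous2_at g x y -> g x y <> 0 ->
  exists d, 0 < d /\ forall x' y', Rabs (x' - x) < d -> Rabs (y' - y) < d -> g x' y' <> 0.
Proof.
  intros Hc Hn. destruct (Hc (Rabs (g x y)) (Rabs_pos_lt _ Hn)) as [d [Hd H]].
  exists d. split; auto. intros x' y' H1 H2 E. specialize (H x' y' H1 H2). rewrite E in H.
  replace (0 - g x y) with (- g x y) in H by ring. rewrite Rabs_Ropp in H. lra.
Qed.

Lemma partial_nz U phi dx dy (Hs : Ck 1 U phi)
  (Hd : forall x y, U x y -> derivable_pt_lim (fun t => phi t y) x (dx x y) /\
                            derivable_pt_lim (fun t => phi x t) y (dy x y)) x y : U x y ->
  (dx x y <> 0 -> exists d, 0 < d /\ forall x' y', Rabs (x' - x) < d -> Rabs (y' - y) < d -> U x' y' -> dx x' y' <> 0) /\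
  (dy x y <> 0 -> exists d, 0 < d /\ forall x' y', Rabs (x' - x) < d -> Rabs (y' - y) < d -> U x' y' -> dy x' y' <> 0).
Proof.
  intros HU. destruct Hs as [fx [fy [Hfd [Hcx Hcy]]]]. simpl in Hcx, Hcy.
  assert (Ex : forall x y, U x y -> fx x y = dx x y).
  { intros a b Hab. apply (uniqueness_limite (fun t => phi t b) a); [apply Hfd|apply Hd]; auto. }
  assert (Ey : forall x y, U x y -> fy x y = dy x y).
  { intros a b Hab. apply (uniqueness_limite (fun t => phi a t) b); [apply Hfd|apply Hd]; auto. }
  split; intro Hn.
  - rewrite <- Ex in Hn by auto. destruct (nz_near fx x y (Hcx x y HU) Hn) as [d [Hd0 H]].
    exists d. split; auto. intros. rewrite <- Ex; auto.
  - rewrite <- Ey in Hn by auto. destruct (nz_near fy x y (Hcy x y HU) Hn) as [d [Hd0 H]].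
    exists d. split; auto. intros. rewrite <- Ey; auto.
Qed.

Theorem lemma7p1
  (I : R -> Prop) (HI : open_interval_without_0 I)
  (Y : R -> R) (HY : forall s, I s -> derivable_pt_lim Y s (integrand s))
  (k kt : R) (hk : k <> 0) (hkt : kt <> 0)
  (U : R -> R -> Prop) (HUo : open2 U) (HUne : exists x y, U x y)
  (HUdom : forall x y, U x y -> dom I Y x y)
  (phi1 phi2 : R -> R -> R)
  (Hs1 : smooth_on U phi1) (Hs2 : smooth_on U phi2)
  (d1x d1y d2x d2y : R -> R -> R)
  (Hd : forall x y, U x y ->
      derivable_pt_lim (fun t => phi1 t y) x (d1x x y) /\
      derivable_pt_lim (fun t => phi1 x t) y (d1y x y) /\
      derivable_pt_lim (fun t => phi2 t y) x (d2x x y) /\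
      derivable_pt_lim (fun t => phi2 x t) y (d2y x y))
  (Hjac : forall x y, U x y -> d1x x y * d2y x y - d1y x y * d2x x y <> 0)
  (Himg : forall x y, U x y -> dom I Y (phi1 x y) (phi2 x y))
  (Hpull : forall x y, U x y -> forall u v : R * R,
      gk Y kt (phi1 x y) (phi2 x y)
         (jac_apply (d1x x y) (d1y x y) (d2x x y) (d2y x y) u)
         (jac_apply (d1x x y) (d1y x y) (d2x x y) (d2y x y) v)
      = gk Y k x y u v) :
  k = kt.
Proof.
  assert (Hpt : forall x y, U x y -> d1x x y * d2x x y = 0 /\ d1y x y * d2y x y = 0 /\
     kt * (Y (phi2 x y) + phi1 x y) * (d1x x y * d2y x y + d1y x y * d2x x y) = k * (Y y + x)).
  { intros x y Hxy. destruct (Himg x y Hxy) as [_ Hn].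
    assert (Hn2 : kt * (Y (phi2 x y) + phi1 x y) <> 0) by (apply Rmult_integral_contrapositive_currified; auto).
    assert (H1 := Hpull x y Hxy (1,0) (1,0)). assert (H2 := Hpull x y Hxy (0,1) (0,1)).
    assert (H3 := Hpull x y Hxy (1,0) (0,1)).
    unfold gk, jac_apply in H1, H2, H3. simpl in H1, H2, H3.
    repeat split.
    - apply (Rmult_eq_reg_l (kt * (Y (phi2 x y) + phi1 x y))); auto.
      transitivity (kt * (Y (phi2 x y) + phi1 x y) * (((d1x x y * 1 + d1y x y * 0) * (d2x x y * 1 + d2y x y * 0) +
        (d2x x y * 1 + d2y x y * 0) * (d1x x y * 1 + d1y x y * 0)) / 2)); [field|rewrite H1; field].
    - apply (Rmult_eq_reg_l (kt * (Y (phi2 x y) + phi1 x y))); auto.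
      transitivity (kt * (Y (phi2 x y) + phi1 x y) * (((d1x x y * 0 + d1y x y * 1) * (d2x x y * 0 + d2y x y * 1) +
        (d2x x y * 0 + d2y x y * 1) * (d1x x y * 0 + d1y x y * 1)) / 2)); [field|rewrite H2; field].
    - apply (Rmult_eq_reg_r (/2)); [|apply Rinv_neq_0_compat; lra].
      transitivity (kt * (Y (phi2 x y) + phi1 x y) * (((d1x x y * 1 + d1y x y * 0) * (d2x x y * 0 + d2y x y * 1) +
        (d2x x y * 1 + d2y x y * 0) * (d1x x y * 0 + d1y x y * 1)) / 2)); [field|rewrite H3; field]. }
  assert (Hd1 : forall x y, U x y -> derivable_pt_lim (fun t => phi1 t y) x (d1x x y) /\
                            derivable_pt_lim (fun t => phi1 x t) y (d1y x y))
    by (intros x y H; destruct (Hd x y H) as [? [? [? ?]]]; auto).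
  assert (Hd2 : forall x y, U x y -> derivable_pt_lim (fun t => phi2 t y) x (d2x x y) /\
                            derivable_pt_lim (fun t => phi2 x t) y (d2y x y))
    by (intros x y H; destruct (Hd x y H) as [? [? [? ?]]]; auto).
  destruct HUne as [x0 [y0 H0]].
  destruct (HUo x0 y0 H0) as [r0 [Hr0 Hsq0]].
  destruct (partial_nz U phi1 d1x d1y (Hs1 1%nat) Hd1 x0 y0 H0) as [N1x N1y].
  destruct (partial_nz U phi2 d2x d2y (Hs2 1%nat) Hd2 x0 y0 H0) as [N2x N2y].
  destruct (Hpt x0 y0 H0) as [Hac0 [Hbd0 _]]. assert (Hj0 := Hjac x0 y0 H0).
  destruct (Req_dec (d1x x0 y0) 0) as [Ha0|Ha0].
  -
    rewrite Ha0 in Hj0.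
    assert (Hb0 : d1y x0 y0 <> 0) by (intro E; apply Hj0; rewrite E; ring).
    assert (Hc0 : d2x x0 y0 <> 0) by (intro E; apply Hj0; rewrite E; ring).
    destruct (N1y Hb0) as [db [Hdb Hb]]. destruct (N2x Hc0) as [dc [Hdc Hc]].
    set (r := Rmin r0 (Rmin db dc)).
    assert (Hr : 0 < r) by (unfold r; repeat apply Rmin_glb_lt; auto).
    assert (HS : forall x y, Rabs (x - x0) < r -> Rabs (y - y0) < r ->
       U x y /\ d1x x y = 0 /\ d2y x y = 0 /\ d1y x y <> 0 /\ d2x x y <> 0).
    { intros x y Hx Hy.
      assert (Hr1 : r <= r0) by apply Rmin_l.
      assert (Hr2 : r <= db) by (eapply Rle_trans; [apply Rmin_r|apply Rmin_l]).
      assert (Hr3 : r <= dc) by (eapply Rle_trans; [apply Rmin_r|apply Rmin_r]).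
      assert (HU : U x y) by (apply Hsq0; lra).
      assert (Hbn : d1y x y <> 0) by (apply Hb; auto; lra).
      assert (Hcn : d2x x y <> 0) by (apply Hc; auto; lra).
      destruct (Hpt x y HU) as [Hac [Hbd _]].
      repeat split; auto.
      - apply Rmult_integral in Hac. destruct Hac; auto. contradiction.
      - apply Rmult_integral in Hbd. destruct Hbd; auto. contradiction. }
    assert (Hp1 : forall x y, Rabs (x - x0) < r -> Rabs (y - y0) < r -> phi1 x y = phi1 x0 y).
    { intros x y Hx Hy. apply (const_on (fun t => phi1 t y) x0 r); auto.
      intros u Hu. destruct (HS u y Hu Hy) as [HU [Ha _]]. rewrite <- Ha. apply Hd1; auto. }
    assert (Hp2 : forall x y, Rabs (x - x0) < r -> Rabs (y - y0) < r -> phi2 x y = phi2 x y0).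
    { intros x y Hx Hy. apply (const_on (fun t => phi2 x t) y0 r); auto.
      intros u Hu. destruct (HS x u Hx Hu) as [HU [_ [Hdd _]]]. rewrite <- Hdd. apply Hd2; auto. }
    assert (Hx0 := c0in x0 r Hr). assert (Hy0 := c0in y0 r Hr).
    exfalso. apply (case2 I HI Y HY k kt hk hkt x0 y0 r Hr (fun y => phi1 x0 y) (fun y => d1y x0 y)
      (fun x => phi2 x y0) (fun x => d2x x y0)).
    + intros y Hy. apply Hd1. apply HS; auto.
    + intros y Hy. apply HS; auto.
    + intros y Hy. destruct (HUdom x0 y) as [HIy _]; auto. apply HS; auto.
    + intros x y Hx Hy. destruct (HS x y Hx Hy) as [HU [Ha [Hdd _]]].
      destruct (Hpt x y HU) as [_ [_ E]]. rewrite Ha, Hdd in E.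
      rewrite <- (Hp1 x y Hx Hy), <- (Hp2 x y Hx Hy).
      replace (d1y x0 y) with (d1y x y).
      replace (d2x x y0) with (d2x x y).
      * rewrite <- E. ring.
      * apply (eq_deriv (fun t => phi2 t y) (fun t => phi2 t y0) x _ _ (r - Rabs (x - x0))); [lra| | |].
        -- intros t Ht. apply Hp2; auto. apply (in_nbhd x0 r x Hx t Ht).
        -- apply Hd2; auto.
        -- apply Hd2. apply HS; auto.
      * apply (eq_deriv (fun t => phi1 x t) (fun t => phi1 x0 t) y _ _ (r - Rabs (y - y0))); [lra| | |].
        -- intros t Ht. apply Hp1; auto. apply (in_nbhd y0 r y Hy t Ht).
        -- apply Hd1; auto.
        -- apply Hd1. apply HS; auto.
  -
    assert (Hc0 : d2x x0 y0 = 0) by (apply Rmult_integral in Hac0; destruct Hac0; auto; contradiction).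
    rewrite Hc0 in Hj0.
    assert (Hdd0 : d2y x0 y0 <> 0) by (intro E; apply Hj0; rewrite E; ring).
    destruct (N1x Ha0) as [da [Hda Ha]]. destruct (N2y Hdd0) as [dd [Hdd Hdn]].
    set (r := Rmin r0 (Rmin da dd)).
    assert (Hr : 0 < r) by (unfold r; repeat apply Rmin_glb_lt; auto).
    assert (HS : forall x y, Rabs (x - x0) < r -> Rabs (y - y0) < r ->
       U x y /\ d1y x y = 0 /\ d2x x y = 0 /\ d1x x y <> 0 /\ d2y x y <> 0).
    { intros x y Hx Hy.
      assert (Hr1 : r <= r0) by apply Rmin_l.
      assert (Hr2 : r <= da) by (eapply Rle_trans; [apply Rmin_r|apply Rmin_l]).
      assert (Hr3 : r <= dd) by (eapply Rle_trans; [apply Rmin_r|apply Rmin_r]).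
      assert (HU : U x y) by (apply Hsq0; lra).
      assert (Han : d1x x y <> 0) by (apply Ha; auto; lra).
      assert (Hdn' : d2y x y <> 0) by (apply Hdn; auto; lra).
      destruct (Hpt x y HU) as [Hac [Hbd _]].
      repeat split; auto.
      - apply Rmult_integral in Hbd. destruct Hbd; auto. contradiction.
      - apply Rmult_integral in Hac. destruct Hac; auto. contradiction. }
    assert (Hp1 : forall x y, Rabs (x - x0) < r -> Rabs (y - y0) < r -> phi1 x y = phi1 x y0).
    { intros x y Hx Hy. apply (const_on (fun t => phi1 x t) y0 r); auto.
      intros u Hu. destruct (HS x u Hx Hu) as [HU [Hb _]]. rewrite <- Hb. apply Hd1; auto. }
    assert (Hp2 : forall x y, Rabs (x - x0) < r -> Rabs (y - y0) < r -> phi2 x y = phi2 x0 y).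
    { intros x y Hx Hy. apply (const_on (fun t => phi2 t y) x0 r); auto.
      intros u Hu. destruct (HS u y Hu Hy) as [HU [_ [Hc _]]]. rewrite <- Hc. apply Hd2; auto. }
    assert (Hx0 := c0in x0 r Hr). assert (Hy0 := c0in y0 r Hr).
    apply (case1 I HI Y HY k kt hk hkt x0 y0 r Hr (fun x => phi1 x y0) (fun x => d1x x y0)
      (fun y => phi2 x0 y) (fun y => d2y x0 y)).
    + intros x Hx. apply Hd1. apply HS; auto.
    + intros y Hy. apply Hd2. apply HS; auto.
    + intros x Hx. apply HS; auto.
    + intros y Hy. apply HS; auto.
    + intros y Hy. destruct (HUdom x0 y) as [HIy _]; auto. apply HS; auto.
    + intros y Hy. destruct (Himg x0 y) as [HIy _]; auto. apply HS; auto.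
    + intros x y Hx Hy. destruct (HS x y Hx Hy) as [HU [Hb [Hc _]]].
      destruct (Hpt x y HU) as [_ [_ E]]. rewrite Hb, Hc in E.
      rewrite <- (Hp1 x y Hx Hy), <- (Hp2 x y Hx Hy).
      replace (d1x x y0) with (d1x x y).
      replace (d2y x0 y) with (d2y x y).
      * rewrite <- E. ring.
      * apply (eq_deriv (fun t => phi2 x t) (fun t => phi2 x0 t) y _ _ (r - Rabs (y - y0))); [lra| | |].
        -- intros t Ht. apply Hp2; auto. apply (in_nbhd y0 r y Hy t Ht).
        -- apply Hd2; auto.
        -- apply Hd2. apply HS; auto.
      * apply (eq_deriv (fun t => phi1 t y) (fun t => phi1 t y0) x _ _ (r - Rabs (x - x0))); [lra| | |].
        -- intros t Ht. apply Hp1; auto. apply (in_nbhd x0 r x Hx t Ht).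
        -- apply Hd1; auto.
        -- apply Hd1. apply HS; auto.
Qed.
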